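(* Let $f\equiv 1$ and let $g:(0,1]\to(0,\infty)$ be arbitrary. Then the voting scheme $(f,g)$ is not fair for all sample sizes $k$: there exists $k\ge 1$ such that, with sample size $k$, the fairness condition $v_i=v_{i_1}+v_{i_2}$ fails for some network, node and splitting ratio.
   Context: A network consists of $N$ nodes with weights $m_1,\dots,m_N>0$, $\sum_{i=1}^N m_i=1$. A voting scheme is a pair of functions $(f,g)$ from $(0,1]$ to $(0,\infty)$. In each query round a node samples $k\ge 1$ nodes independently with replacement, node $j$ being chosen with probability $p_j=f(m_j)/\sum_{i=1}^N f(m_i)$; each opinion of node $j$ is weighted by $g_j=g(m_j)$. The voting power of node $i$ is $$v_i=\sum_{\mathbf y\in\mathbb N^N:\ y_1+\dots+y_N=k}\frac{k!}{y_1!\cdots y_N!}\,\frac{y_i g_i}{\sum_{n=1}^N y_n g_n}\prod_{j=1}^N p_j^{y_j},$$ where $\mathbb N=\{0,1,2,\dots\}$. Splitting: node $i$ of weight $m_i$ is replaced by two nodes $i_1,i_2$ of weights $x m_i$ and $(1-x)m_i$, $x\in(0,1)$, all other nodes unchanged; $v_{i_1},v_{i_2}$ denote the voting powers in the new network (with the same $k$). The scheme is fair for sample size $k$ if $v_i=v_{i_1}+v_{i_2}$ for every network, every node $i$ and every $x\in(0,1)$. *)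

(* Defs.v *)
From HB Require Import structures.
From mathcomp Require Import all_boot all_order all_algebra.
From mathcomp Require Import reals.
Set Implicit Arguments. Unset Strict Implicit. Unset Printing Implicit Defensive.
Import Order.TTheory GRing.Theory Num.Theory.
Local Open Scope ring_scope.

Section Voting.
Variable R : realType.

Definition prob (f : R -> R) (N : nat) (m : 'I_N -> R) (j : 'I_N) : R :=
  f (m j) / \sum_(i < N) f (m i).

Definition multinom (k N : nat) (y : {ffun 'I_N -> 'I_k.+1}) : R :=
  (k`!)%:R / \prod_(j < N) ((y j)`!)%:R.

(* voting power v_i; the sum ranges over all y in N^N with y_1+...+y_N = k
   (each y_j is then <= k, so y is encoded as a function into 'I_k.+1) *)
Definition vpower (f g : R -> R) (k N : nat) (m : 'I_N -> R) (i : 'I_N) : R :=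
  \sum_(y : {ffun 'I_N -> 'I_k.+1} | (\sum_(j < N) (y j : nat))%N == k)
     multinom y * (((y i : nat)%:R * g (m i)) / \sum_(n < N) (y n : nat)%:R * g (m n))
     * \prod_(j < N) prob f m j ^+ (y j : nat).

(* splitting node i with ratio x: the new network has N+1 nodes; node i
   (as widen_ord) becomes i_1 with weight x m_i, and the new last node
   ord_max is i_2 with weight (1-x) m_i; all other nodes unchanged. *)
Definition split_net (N : nat) (m : 'I_N -> R) (i : 'I_N) (x : R) :
  'I_N.+1 -> R :=
  fun j => match unlift ord_max j with
           | Some j' => if j' == i then x * m i else m j'
           | None => (1 - x) * m i
           end.

Definition node1 (N : nat) (i : 'I_N) : 'I_N.+1 := widen_ord (leqnSn N) i.
Definition node2 (N : nat) : 'I_N.+1 := ord_max.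

Definition fair (f g : R -> R) (k : nat) : Prop :=
  forall (N : nat) (m : 'I_N -> R),
    (forall j, 0 < m j) -> \sum_(j < N) m j = 1 ->
    forall (i : 'I_N) (x : R), 0 < x < 1 ->
      vpower f g k m i =
      vpower f g k (split_net m i x) (node1 i)
      + vpower f g k (split_net m i x) (node2 N).

End Voting.

(* Main.v *)
Require Import Defs.
From HB Require Import structures.
From mathcomp Require Import all_boot all_order all_algebra.
From mathcomp Require Import reals.
From mathcomp Require Import zify ring lra.
Import Order.TTheory GRing.Theory Num.Theory.
Local Open Scope ring_scope.

Section S.
Variable R : realType.

Definition ev {N : nat} (j : 'I_N) : {ffun 'I_N -> 'I_2} :=
  [ffun n => if n == j then ord_max else ord0].

Lemma evE N (j n : 'I_N) : (ev j n : nat) = (n == j) :> nat.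
Proof. by rewrite ffunE; case: eqP. Qed.

Lemma ev_sum N (j : 'I_N) : (\sum_(n < N) (ev j n : nat))%N = 1%N.
Proof.
rewrite (bigD1 j) //= big1 ?evE ?eqxx // => n /negbTE hn.
by rewrite evE hn.
Qed.

Lemma pick_ev N (d j : 'I_N) : odflt d [pick n | ev j n != ord0] = j.
Proof.
case: (pickP (fun n => ev j n != ord0)) => [n | H] /=.
  by rewrite ffunE; case: (n =P j) => // _; rewrite eqxx.
by have := H j; rewrite ffunE eqxx.
Qed.

Lemma ev_inv N (d : 'I_N) (y : {ffun 'I_N -> 'I_2}) :
  (\sum_(n < N) (y n : nat))%N == 1%N -> ev (odflt d [pick n | y n != ord0]) = y.
Proof.
move=> /eqP hs.
case: (pickP (fun n => y n != ord0)) => [j hj | H] /=; last first.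
  move: hs; rewrite big1 // => n _.
  by have := H n => /negbFE /eqP ->.
have hj1 : (0 < y j)%N by rewrite lt0n; apply: contra hj => /eqP h; apply/eqP/val_inj.
move: hs; rewrite (bigD1 j) //= => hs.
have hy : y j = 1%N :> nat by have := ltn_ord (y j); lia.
move: hs; rewrite hy add1n => -[/eqP hr].
apply/ffunP => n; rewrite ffunE; apply: val_inj => /=.
case: eqP => [-> // | /eqP hn].
move: hr; rewrite sum_nat_eq0 => /forall_inP /(_ n hn) /eqP -> //.
Qed.

Lemma vp1 (g : R -> R) N (m : 'I_N -> R) (i : 'I_N) :
  g (m i) != 0 -> vpower (fun _ => 1) g 1 m i = N%:R^-1.
Proof.
move=> gi.
rewrite /vpower.
rewrite (reindex_onto (@ev N) (fun y => odflt i [pick j | y j != ord0])); last first.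
  by move=> y; apply: ev_inv.
rewrite (eq_bigl (fun _ => true)); last by move=> j; rewrite ev_sum pick_ev !eqxx.
rewrite (bigD1 i) //= [X in _ + X]big1 ?addr0; last first.
  move=> j /negbTE hj.
  by rewrite evE eq_sym hj mul0r mul0r mulr0 mul0r.
have hm : multinom R (ev i) = 1.
  rewrite /multinom big1 ?divr1 // => n _; rewrite evE; by case: (n == i).
have hd : \sum_(n < N) (ev i n : nat)%:R * g (m n) = g (m i).
  rewrite (bigD1 i) //= big1 ?addr0 ?evE ?eqxx ?mul1r // => n /negbTE hn.
  by rewrite evE hn mul0r.
have hp : \prod_(j < N) prob (fun _ => 1) m j ^+ (ev i j : nat) = prob (fun _ => 1) m i.
  rewrite (bigD1 i) //= big1 ?mulr1 ?evE ?eqxx ?expr1 // => n /negbTE hn.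
  by rewrite evE hn expr0.
rewrite hm hd hp evE eqxx mul1r mul1r divff // mul1r.
rewrite /prob sumr_const card_ord mul1r.
done.
Qed.

Lemma sn1 N (m : 'I_N -> R) (i : 'I_N) x :
  split_net m i x (node1 i) = x * m i.
Proof.
have -> : node1 i = lift ord_max i by by apply: val_inj; rewrite /= /bump leqNgt ltn_ord.
by rewrite /split_net liftK eqxx.
Qed.

Lemma sn2 N (m : 'I_N -> R) (i : 'I_N) x :
  split_net m i x (node2 N) = (1 - x) * m i.
Proof. by rewrite /split_net /node2 unlift_none. Qed.

End S.

Theorem theorem2 (R : realType) (g : R -> R)
  (hg : forall x : R, 0 < x <= 1 -> 0 < g x) :
  exists k : nat, (1 <= k)%N /\ ~ fair (fun _ : R => 1) g k.
Proof.
exists 1%N; split => // H.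
pose m : 'I_2 -> R := fun _ => 2^-1.
have hx0 : (0 : R) < 2^-1 by rewrite invr_gt0.
have hx : (0 < (2:R)^-1) && ((2:R)^-1 < 1).
  by apply/andP; split; lra.
have := H 2%N m (fun _ => hx0) _ ord0 2^-1 hx.
have -> : \sum_(j < 2) m j = 1.
  by rewrite big_ord_recr /= big_ord_recr /= big_ord0 add0r /m; lra.
move=> /(_ erefl).
have h4 : (0 < (2:R)^-1 * 2^-1) && ((2:R)^-1 * 2^-1 <= 1).
  by apply/andP; split; lra.
have h2 : (0 < (2:R)^-1) && ((2:R)^-1 <= 1).
  by apply/andP; split; lra.
rewrite (@vp1 R g 2 m ord0); last by rewrite gt_eqF // hg.
rewrite (@vp1 R g 3 (split_net m ord0 2^-1) (node1 ord0)); last by rewrite sn1 gt_eqF // hg.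
rewrite (@vp1 R g 3 (split_net m ord0 2^-1) (node2 2)); last first.
  rewrite sn2 /m gt_eqF // hg //.
  have -> : (1 - (2:R)^-1) = 2^-1 by lra.
  done.
move/eqP; rewrite -subr_eq0.
have -> : (2%:R^-1 - (3%:R^-1 + 3%:R^-1) : R) = - 6^-1 by field.
by rewrite oppr_eq0 invr_eq0 pnatr_eq0.
Qed.
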